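(* For all integers $n\ge0$, $nov(n)=\frac12\overline{M}_2(n)$ and $ov(n)=\frac12\overline{M}_2(n)-\overline{M2}_2(n)$.
   Context: An overpartition of $n$ is a partition of $n$ in which the first occurrence of each distinct part may be overlined. $nov(n)$ (resp. $ov(n)$) is the sum, over all overpartitions of $n$, of the non-overlined (resp. overlined) parts. With $(a;q)_\infty=\prod_{j\ge0}(1-aq^j)$, define $\overline{M}(m,n)$, $\overline{M2}(m,n)$ by $\sum_{m,n}\overline{M}(m,n)z^mq^n=\frac{(q^2;q^2)_\infty}{(zq;q)_\infty(q/z;q)_\infty}$ and $\sum_{m,n}\overline{M2}(m,n)z^mq^n=\frac{(-q;q)_\infty(q^2;q^2)_\infty}{(q;q^2)_\infty(zq^2;q^2)_\infty(q^2/z;q^2)_\infty}$ (first and second residual crank counts), and $\overline{M}_2(n)=\sum_m m^2\overline{M}(m,n)$, $\overline{M2}_2(n)=\sum_m m^2\overline{M2}(m,n)$. *)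

(* Defs.v *)
From mathcomp Require Import all_boot all_order all_algebra.
Set Implicit Arguments. Unset Strict Implicit. Unset Printing Implicit Defensive.
Import Order.TTheory GRing.Theory Num.Theory.
Local Open Scope ring_scope.

(* An overpartition of n is encoded by its multiplicity data: for each  *)
(* part size i.+1 (i : 'I_n) a multiplicity (f i).1 and a flag (f i).2  *)
(* saying whether the first occurrence of the part i.+1 is overlined    *)
(* (allowed only when the part occurs, i.e. (f i).1 > 0).               *)
Definition ovp_data (n : nat) := {ffun 'I_n -> 'I_n.+1 * bool}.

Definition is_ovp (n : nat) (f : ovp_data n) : bool :=
  ((\sum_(i < n) i.+1 * (f i).1)%N == n) &&
  [forall i, (f i).2 ==> (0 < (f i).1)%N].

Definition nonover_sum (n : nat) (f : ovp_data n) : nat :=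
  (\sum_(i < n) i.+1 * ((f i).1 - (f i).2))%N.

Definition over_sum (n : nat) (f : ovp_data n) : nat :=
  (\sum_(i < n) i.+1 * (f i).2)%N.

Definition nov (n : nat) : nat :=
  (\sum_(f : ovp_data n | is_ovp f) nonover_sum f)%N.

Definition ov (n : nat) : nat :=
  (\sum_(f : ovp_data n | is_ovp f) over_sum f)%N.

(* Formal power series in q whose coefficients are Laurent polynomials  *)
(* in z: a s n m = coefficient of z^m q^n.  All series used below have  *)
(* z-support in [-n, n] at q^n, which is what smul relies on.           *)
Definition series := nat -> int -> int.

Definition sone : series := fun n m => if (n == 0%N) && (m == 0) then 1 else 0.

(* Cauchy product (valid when a has z-support [-i,i] at q^i) *)
Definition smul (a b : series) : series := fun n m =>
  \sum_(i < n.+1) \sum_(k < (2 * i).+1)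
     a i (k%:Z - i%:Z) * b (n - i)%N (m - (k%:Z - i%:Z)).

Definition binom1 (s : int) (k : nat) : series := fun n m =>
  (if (n == 0%N) && (m == 0) then 1 else 0) +
  (if (n == k) && (m == 0) then s else 0).

(* 1 / (1 - z^e q^k) = \sum_(j >= 0) z^(e j) q^(k j),  for k >= 1 *)
Definition geo (e : int) (k : nat) : series := fun n m =>
  if (k %| n)%N && (m == e * (n %/ k)%:Z) then 1 else 0.

Fixpoint sprod (F : nat -> series) (N : nat) : series :=
  match N with
  | 0 => sone
  | N'.+1 => smul (F N) (sprod F N')
  end.

(* infinite product \prod_(k>=1) F k, where the factor F k is 1 + O(q^k):
   the coefficient of q^n only depends on the factors with k <= n. *)
Definition iprod_coef (F : nat -> series) (n : nat) (m : int) : int :=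
  sprod F n n m.

(* (q^2;q^2)_oo / ((zq;q)_oo (q/z;q)_oo)
   = \prod_(k>=1) (1 - q^(2k)) / ((1 - z q^k)(1 - q^k/z)) *)
Definition Mbar_factor (k : nat) : series :=
  smul (binom1 (-1) (2 * k)) (smul (geo 1 k) (geo (-1) k)).

Definition Mbar (m : int) (n : nat) : int := iprod_coef Mbar_factor n m.

(* (-q;q)_oo (q^2;q^2)_oo / ((q;q^2)_oo (zq^2;q^2)_oo (q^2/z;q^2)_oo)
   = \prod_(k>=1) (1+q^k)(1-q^(2k)) /
        ((1 - q^(2k-1)) (1 - z q^(2k)) (1 - q^(2k)/z)) *)
Definition M2bar_factor (k : nat) : series :=
  smul (binom1 1 k)
   (smul (binom1 (-1) (2 * k))
    (smul (geo 0 (2 * k).-1)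
     (smul (geo 1 (2 * k)) (geo (-1) (2 * k))))).

Definition M2bar (m : int) (n : nat) : int := iprod_coef M2bar_factor n m.

(* second moments: the z-support at q^n is contained in [-n, n] *)
Definition Mbar_2 (n : nat) : int :=
  \sum_(k < (2 * n).+1) (k%:Z - n%:Z) ^+ 2 * Mbar (k%:Z - n%:Z) n.

Definition M2bar_2 (n : nat) : int :=
  \sum_(k < (2 * n).+1) (k%:Z - n%:Z) ^+ 2 * M2bar (k%:Z - n%:Z) n.

(* Main.v *)
Require Import Defs.
From mathcomp Require Import all_boot all_order all_algebra.
From mathcomp Require Import zify ring.
Import Order.TTheory GRing.Theory Num.Theory.
Local Open Scope ring_scope.
Set Implicit Arguments. Unset Strict Implicit. Unset Printing Implicit Defensive.


Definition tr (N : nat) (p : {poly int}) : {poly int} := \poly_(i < N.+1) p`_i.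

Lemma coef_tr N (p : {poly int}) i : (tr N p)`_i = if (i <= N)%N then p`_i else 0.
Proof. by rewrite /tr coef_poly ltnS. Qed.

Lemma trP N (p q : {poly int}) : (forall i, (i <= N)%N -> p`_i = q`_i) -> tr N p = tr N q.
Proof. by move=> H; apply/polyP=> i; rewrite !coef_tr; case: ifP => // /H. Qed.

Lemma trD N (p q : {poly int}) : tr N (p + q) = tr N p + tr N q.
Proof. by apply/polyP=> i; rewrite coefD !coef_tr coefD; case: ifP; rewrite ?addr0. Qed.

Lemma trN N (p : {poly int}) : tr N (- p) = - tr N p.
Proof. by apply/polyP=> i; rewrite coefN !coef_tr coefN; case: ifP; rewrite ?oppr0. Qed.

Lemma trB N (p q : {poly int}) : tr N (p - q) = tr N p - tr N q.
Proof. by rewrite trD trN. Qed.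

Lemma tr_tr N (p : {poly int}) : tr N (tr N p) = tr N p.
Proof. by apply: trP => i Hi; rewrite coef_tr Hi. Qed.

Lemma trMl N (p q : {poly int}) : tr N (tr N p * q) = tr N (p * q).
Proof.
apply: trP => i Hi; rewrite !coefM; apply: eq_bigr => j _.
by rewrite coef_tr (leq_trans _ Hi) // -ltnS.
Qed.

Lemma trMr N (p q : {poly int}) : tr N (p * tr N q) = tr N (p * q).
Proof. by rewrite mulrC trMl mulrC. Qed.

Lemma trM_eq N (p p' q : {poly int}) : tr N p = tr N p' -> tr N (p * q) = tr N (p' * q).
Proof. by move=> E; rewrite -trMl E trMl. Qed.

Lemma trM_eqr N (p q q' : {poly int}) : tr N q = tr N q' -> tr N (p * q) = tr N (p * q').
Proof. by move=> E; rewrite -trMr E trMr. Qed.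

Lemma tr_eq0 N (p : {poly int}) : tr N p = 0 -> forall q, tr N (q * p) = 0.
Proof. by move=> E q; rewrite -trMr E mulr0 /tr; apply/polyP=> i; rewrite coef_poly coef0 if_same. Qed.

Lemma trX N m : (N < m)%N -> tr N 'X^m = 0.
Proof.
move=> H; apply/polyP => i; rewrite coef_tr coefXn coef0.
case: ifP => // Hi; case: eqP => // E; subst; by rewrite leqNgt H in Hi.
Qed.

Lemma trXM N m (q : {poly int}) : (N < m)%N -> tr N (q * 'X^m) = 0.
Proof. by move=> H; apply: tr_eq0; apply: trX. Qed.

Lemma tr_coef N (p : {poly int}) : (tr N p)`_N = p`_N.
Proof. by rewrite coef_tr leqnn. Qed.

Lemma tr_prod N (I : Type) (r : seq I) (P : pred I) (F G : I -> {poly int}) :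
  (forall i, P i -> tr N (F i) = tr N (G i)) ->
  tr N (\prod_(i <- r | P i) F i) = tr N (\prod_(i <- r | P i) G i).
Proof.
move=> H; elim: r => [|x r IH]; first by rewrite !big_nil.
rewrite !big_cons; case: ifP => Px //.
by rewrite (trM_eq _ (H x Px)) -trMr IH trMr.
Qed.

Lemma tr_sum N (I : Type) (r : seq I) (P : pred I) (F : I -> {poly int}) :
  tr N (\sum_(i <- r | P i) F i) = \sum_(i <- r | P i) tr N (F i).
Proof.
elim: r => [|x r IH]; first by rewrite !big_nil /tr; apply/polyP=> i; rewrite coef_poly coef0 if_same.
by rewrite !big_cons; case: ifP => _; rewrite ?trD IH.
Qed.


Definition GS (N c : nat) (a : nat -> int) : {poly int} :=
  \sum_(s < N.+1) a s *: 'X^(c * s).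

Definition g0 N c := GS N c (fun _ => 1).
Definition g1 N c := GS N c (fun s => s%:Z).
Definition g2 N c := GS N c (fun s => s%:Z ^+ 2).

Lemma GS_tele N c a :
  (1 - 'X^c) * GS N c a = (a 0%N)%:P + \sum_(s < N) (a s.+1 - a s) *: 'X^(c * s.+1)
     - a N *: 'X^(c * N.+1).
Proof.
have E : 'X^c * GS N c a = \sum_(s < N.+1) a s *: 'X^(c * s.+1).
  rewrite /GS mulr_sumr; apply: eq_bigr => s _.
  by rewrite -scalerAr -exprD mulnS.
rewrite mulrBl mul1r E /GS big_ord_recl big_ord_recr /=.
rewrite muln0 expr0 -alg_polyC /=.
set S1 := \sum_(i < N) _; set S2 := \sum_(i < N) _.
have -> : \sum_(s < N) (a s.+1 - a s) *: 'X^(c * s.+1) = S1 - S2.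
  by rewrite -sumrB; apply: eq_bigr => s _; rewrite scalerBl.
by rewrite opprD !addrA.
Qed.

Lemma g0E N c : g0 N c = 1 + \sum_(s < N) 'X^(c * s.+1).
Proof. by rewrite /g0 /GS big_ord_recl muln0 expr0 scale1r; congr (_ + _); apply: eq_bigr => s _; rewrite scale1r. Qed.

Lemma g1E N c : g1 N c = \sum_(s < N) (s.+1)%:Z *: 'X^(c * s.+1).
Proof. by rewrite /g1 /GS big_ord_recl scale0r add0r. Qed.

Lemma Xg0E N c : 'X^c * g0 N c = \sum_(s < N) 'X^(c * s.+1) + 'X^(c * N.+1).
Proof.
rewrite /g0 /GS mulr_sumr big_ord_recr /= scale1r; congr (_ + _).
by apply: eq_bigr => s _; rewrite scale1r -exprD mulnS.
by rewrite -exprD mulnS.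
Qed.

Lemma L0 N c : (1 - 'X^c) * g0 N c = 1 - 'X^(c * N.+1).
Proof.
rewrite GS_tele big1 ?addr0 ?scale1r // => s _; by rewrite subrr scale0r.
Qed.

Lemma L1 N c : (1 - 'X^c) * g1 N c = 'X^c * g0 N c - (N.+1)%:Z *: 'X^(c * N.+1).
Proof.
rewrite GS_tele Xg0E add0r.
have -> : \sum_(s < N) ((s.+1)%:Z - s%:Z) *: 'X^(c * s.+1) = \sum_(s < N) 'X^(c * s.+1).
  apply: eq_bigr => s _; have -> : (s.+1)%:Z - s%:Z = 1 by lia. by rewrite scale1r.
have -> : (N.+1)%:Z = N%:Z + 1 by lia.
rewrite scalerDl scale1r; ring.
Qed.

Lemma L2 N c : (1 - 'X^c) * g2 N c = 2%:Z *: g1 N c - g0 N c + 1 - (N%:Z ^+ 2) *: 'X^(c * N.+1).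
Proof.
rewrite GS_tele g0E g1E expr0n /= add0r.
have -> : \sum_(s < N) ((s.+1)%:Z ^+ 2 - s%:Z ^+ 2) *: 'X^(c * s.+1) =
   2%:Z *: \sum_(s < N) (s.+1)%:Z *: 'X^(c * s.+1) - \sum_(s < N) 'X^(c * s.+1).
  rewrite scaler_sumr -sumrB; apply: eq_bigr => s _.
  rewrite scalerA -[X in _ = _ - X]scale1r -scalerBl; congr (_ *: _); lia.
ring.
Qed.


Lemma sum_shift (H : int -> int) M d L : (d + L <= M)%N ->
  (forall w : int, (w < 0) \/ (L%:Z < w) -> H w = 0) ->
  \sum_(t < M.+1) H (t%:Z - d%:Z) = \sum_(v < L.+1) H v%:Z.
Proof.
move=> HdL H0.
rewrite -(big_mkord xpredT (fun t : nat => H (t%:Z - d%:Z))).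
rewrite -(big_mkord xpredT (fun v : nat => H v%:Z)).
rewrite (big_cat_nat _ (n := d)) //=; last by lia.
rewrite (big_cat_nat _ (m := d) (n := d + L.+1)) //=; try lia.
rewrite big1_seq ?add0r; last first.
  move=> i /andP[_]; rewrite mem_index_iota => Hi; apply: H0; left; lia.
rewrite [X in _ + X]big1_seq ?addr0; last first.
  move=> i /andP[_]; rewrite mem_index_iota => Hi; apply: H0; right; lia.
rewrite -{1}[d]add0n big_addn addKn.
by apply: eq_bigr => i _; rewrite PoszD addrK.
Qed.

Definition supp (a : series) := forall i (m : int), (i%:Z < m) \/ (m < - i%:Z) -> a i m = 0.

Lemma smulW (f : int -> int) (a b : series) n : supp b ->
  \sum_(t < (2*n).+1) f (t%:Z - n%:Z) * smul a b n (t%:Z - n%:Z) =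
  \sum_(j < n.+1) \sum_(u < (2*j).+1) a j (u%:Z - j%:Z) *
     \sum_(v < (2*(n-j)).+1) (b (n-j)%N (v%:Z - (n-j)%:Z) *
         f ((u%:Z - j%:Z) + (v%:Z - (n-j)%:Z))).
Proof.
move=> Hb; rewrite /smul.
under eq_bigr do rewrite mulr_sumr.
rewrite exchange_big /=; apply: eq_bigr => j _.
under eq_bigr do rewrite mulr_sumr.
rewrite exchange_big /=; apply: eq_bigr => u _.
rewrite mulr_sumr.
pose Hf := fun w : int => a j (u%:Z - j%:Z) * (b (n - j)%N (w - (n-j)%:Z) *
         f ((u%:Z - j%:Z) + (w - (n-j)%:Z))).
transitivity (\sum_(t < (2*n).+1) Hf (t%:Z - u%:Z)).
  apply: eq_bigr => t _; rewrite /Hf.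
  have jn : (j <= n)%N by rewrite -ltnS.
  have e1 : t%:Z - n%:Z - (u%:Z - j%:Z) = t%:Z - u%:Z - (n - j)%N%:Z by lia.
  have e2 : t%:Z - n%:Z = u%:Z - j%:Z + (t%:Z - u%:Z - (n - j)%N%:Z) by lia.
  by rewrite e1 {1}e2; ring.
rewrite (@sum_shift Hf (2*n) u (2*(n-j))) //.
  have := ltn_ord u; have := ltn_ord j; lia.
move=> w Hw; rewrite /Hf Hb ?mul0r ?mulr0 //; lia.
Qed.

Definition mom (p : nat) (s : series) (i : nat) : int :=
  \sum_(t < (2*i).+1) (t%:Z - i%:Z) ^+ p * s i (t%:Z - i%:Z).

Lemma mom2_smul (a b : series) n : supp b ->
  mom 2 (smul a b) n = \sum_(j < n.+1) (mom 2 a j * mom 0 b (n-j) +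
     2 * (mom 1 a j * mom 1 b (n-j)) + mom 0 a j * mom 2 b (n-j)).
Proof.
move=> Hb; rewrite /mom (smulW (fun m => m ^+ 2)) //; apply: eq_bigr => j _.
rewrite !big_distrl /= mulr_sumr -!big_split /=; apply: eq_bigr => u _.
rewrite !mulr_sumr -!big_split /=; apply: eq_bigr => v _.
rewrite !expr0; ring.
Qed.

Lemma mom1_smul (a b : series) n : supp b ->
  mom 1 (smul a b) n = \sum_(j < n.+1) (mom 1 a j * mom 0 b (n-j) +
     mom 0 a j * mom 1 b (n-j)).
Proof.
move=> Hb; rewrite /mom (smulW (fun m => m ^+ 1)) //; apply: eq_bigr => j _.
rewrite !big_distrl /= -!big_split /=; apply: eq_bigr => u _.
rewrite !mulr_sumr -!big_split /=; apply: eq_bigr => v _.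
rewrite !expr0; ring.
Qed.

Lemma mom0_smul (a b : series) n : supp b ->
  mom 0 (smul a b) n = \sum_(j < n.+1) mom 0 a j * mom 0 b (n-j).
Proof.
move=> Hb; rewrite /mom (smulW (fun m => m ^+ 0)) //; apply: eq_bigr => j _.
rewrite !big_distrl /=; apply: eq_bigr => u _.
rewrite !mulr_sumr; apply: eq_bigr => v _.
rewrite !expr0; ring.
Qed.


Lemma supp_smul (a b : series) : supp b -> supp (smul a b).
Proof.
move=> Hb n m Hm; rewrite /smul big1 // => i _; rewrite big1 // => k _.
rewrite Hb ?mulr0 //; have := ltn_ord i; have := ltn_ord k; lia.
Qed.

Lemma supp_sprod F N : supp (sprod F N).
Proof.
elim: N => [|N IH] /=; last exact: supp_smul.
move=> i m Hm; rewrite /sone; case: ifP => // /andP[/eqP Hi /eqP Hm0]; exfalso; lia.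
Qed.

Lemma supp_binom1 s k : supp (binom1 s k).
Proof.
move=> i m Hm; rewrite /binom1; have Hm0 : (m == 0) = false by apply/eqP; lia.
by rewrite Hm0 !andbF add0r.
Qed.

Lemma supp_geo e k : (-1 <= e <= 1) -> supp (geo e k).
Proof.
move=> /andP[He1 He2] i m Hm; rewrite /geo; case: ifP => // /andP[_ /eqP Em].
exfalso; have Hd : (i %/ k <= i)%N by apply: leq_div.
have : (e = -1) \/ (e = 0) \/ (e = 1) by lia.
move: Hd Em; move: (i %/ k)%N => d Hd Em.
case=> [E|[E|E]]; subst e; lia.
Qed.

Lemma mom_point p (g : series) i (m0 : int) : - (i%:Z) <= m0 <= i%:Z ->
  (forall m, m != m0 -> g i m = 0) -> mom p g i = m0 ^+ p * g i m0.
Proof.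
move=> /andP[H1 H2] Hg; rewrite /mom.
have Ht : (absz (m0 + i%:Z)%R < (2 * i).+1)%N by lia.
rewrite (bigD1 (Ordinal Ht)) //= big1 ?addr0.
  have -> : (absz (m0 + i%:Z)%R)%:Z - i%:Z = m0 by lia.
  by [].
move=> t Ht'; rewrite Hg ?mulr0 //; apply/eqP => E; move: Ht'.
have : nat_of_ord t = absz (m0 + i%:Z)%R by lia.
by move=> E'; rewrite -val_eqE /= E' eqxx.
Qed.

Lemma mom_binom1 p s k i : mom p (binom1 s k) i = 0 ^+ p * binom1 s k i 0.
Proof.
apply: mom_point; first by lia.
by move=> m /negbTE Hm; rewrite /binom1 Hm !andbF addr0.
Qed.

Lemma mom_geo p e k i : (-1 <= e <= 1) ->
  mom p (geo e k) i = (e * (i %/ k)%:Z) ^+ p * geo e k i (e * (i %/ k)%:Z).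
Proof.
move=> He; apply: mom_point.
  have Hd : (i %/ k <= i)%N by apply: leq_div.
  move: He Hd; move: (i %/ k)%N => d /andP[He1 He2] Hd.
  have : (e = -1) \/ (e = 0) \/ (e = 1) by lia.
  case=> [E|[E|E]]; subst e; lia.
by move=> m /negbTE Hm; rewrite /geo Hm andbF.
Qed.

Definition Mp (N p : nat) (s : series) : {poly int} := \poly_(i < N.+1) mom p s i.

Lemma tr_Mp N p s : tr N (Mp N p s) = Mp N p s.
Proof.
apply/polyP => i; rewrite coef_tr /Mp !coef_poly ltnS.
by case: (i <= N)%N.
Qed.
Lemma Mp_binom1_0 N s k : Mp N 0 (binom1 s k) = tr N (1 + s *: 'X^k).
Proof.
apply/polyP => i; rewrite coef_tr /Mp coef_poly ltnS; case: ifP => // _.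
rewrite mom_binom1 expr0 mul1r /binom1 eqxx !andbT coefD coef1 coefZ coefXn.
by case: (i == 0%N); case: (i == k); rewrite /= ?mulr1 ?mulr0.
Qed.

Lemma Mp_binom1_S N p s k : Mp N p.+1 (binom1 s k) = 0.
Proof.
by apply/polyP => i; rewrite /Mp coef_poly coef0 mom_binom1 expr0n /= mul0r if_same.
Qed.

Lemma Mp_geo N p e k : (0 < k)%N -> (-1 <= e <= 1) ->
  Mp N p (geo e k) = tr N (GS N k (fun s => (e * s%:Z) ^+ p)).
Proof.
move=> Hk He; apply/polyP => i; rewrite coef_tr /Mp coef_poly ltnS; case: ifP => // HiN.
rewrite mom_geo // /geo eqxx andbT /GS coef_sum.
under eq_bigr do rewrite coefZ coefXn.
case: (boolP (k %| i)%N) => Hki.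
- have Hs : (i %/ k < N.+1)%N by rewrite ltnS (leq_trans (leq_div _ _)).
  rewrite (bigD1 (Ordinal Hs)) //= big1 ?addr0.
    by rewrite mulnC divnK // eqxx !mulr1.
  move=> s Hs'; case: eqP => [E|]; last by rewrite mulr0.
  exfalso; move: Hs'; rewrite -val_eqE /= E mulKn //; by rewrite eqxx.
- rewrite mulr0 big1 // => s _; case: eqP => [E|]; last by rewrite mulr0.
  by exfalso; move: Hki; rewrite E dvdn_mulr.
Qed.

Lemma coefMp N p q a b i : (i <= N)%N ->
  (Mp N p a * Mp N q b)`_i = \sum_(j < i.+1) mom p a j * mom q b (i - j).
Proof.
move=> Hi; rewrite coefM; apply: eq_bigr => j _.
have Hj : (j <= N)%N by rewrite (leq_trans _ Hi) // -ltnS.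
have Hj' : (i - j <= N)%N by rewrite (leq_trans (leq_subr _ _) Hi).
by rewrite /Mp !coef_poly !ltnS Hj Hj'.
Qed.

Lemma Mp_smul0 N a b : supp b -> Mp N 0 (smul a b) = tr N (Mp N 0 a * Mp N 0 b).
Proof.
move=> Hb; apply/polyP => i; rewrite coef_tr /Mp coef_poly ltnS.
case: ifP => // Hi; by rewrite -/(Mp N 0 a) -/(Mp N 0 b) coefMp // mom0_smul.
Qed.

Lemma Mp_smul1 N a b : supp b ->
  Mp N 1 (smul a b) = tr N (Mp N 1 a * Mp N 0 b + Mp N 0 a * Mp N 1 b).
Proof.
move=> Hb; apply/polyP => i; rewrite coef_tr /Mp coef_poly ltnS.
case: ifP => // Hi; rewrite -/(Mp N 0 a) -/(Mp N 0 b) -/(Mp N 1 a) -/(Mp N 1 b).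
by rewrite coefD !coefMp // mom1_smul // big_split.
Qed.

Lemma Mp_smul2 N a b : supp b ->
  Mp N 2 (smul a b) = tr N (Mp N 2 a * Mp N 0 b + 2%:R * (Mp N 1 a * Mp N 1 b)
      + Mp N 0 a * Mp N 2 b).
Proof.
move=> Hb; apply/polyP => i; rewrite coef_tr /Mp coef_poly ltnS.
case: ifP => // Hi; rewrite -/(Mp N 0 a) -/(Mp N 0 b) -/(Mp N 1 a) -/(Mp N 1 b).
rewrite -/(Mp N 2 a) -/(Mp N 2 b).
rewrite !coefD mulr_natl coefMn !coefMp // mom2_smul // !big_split /=.
by rewrite -mulr_sumr mulr_natl.
Qed.

Definition mt N s (P0 P1 P2 : {poly int}) :=
  [/\ Mp N 0 s = tr N P0, Mp N 1 s = tr N P1 & Mp N 2 s = tr N P2].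

Lemma trMM N (p q : {poly int}) : tr N (p * q) = tr N (tr N p * tr N q).
Proof. by rewrite trMl trMr. Qed.

Lemma mt_smul N a b A0 A1 A2 B0 B1 B2 : supp b -> mt N a A0 A1 A2 -> mt N b B0 B1 B2 ->
  mt N (smul a b) (A0 * B0) (A1 * B0 + A0 * B1) (A2 * B0 + 2%:R * (A1 * B1) + A0 * B2).
Proof.
move=> Hb [a0 a1 a2] [b0 b1 b2]; split.
- by rewrite Mp_smul0 // a0 b0 -trMM.
- by rewrite Mp_smul1 // !trD a0 a1 b0 b1 -!trMM.
- rewrite Mp_smul2 // !trD a0 a1 a2 b0 b1 b2 -!trMM.
  by rewrite (trMM N 2%:R) -(trMM N (A1) B1) -trMM.
Qed.

Lemma mt_eq N s P0 P1 P2 Q0 Q1 Q2 : tr N P0 = tr N Q0 -> tr N P1 = tr N Q1 ->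
  tr N P2 = tr N Q2 -> mt N s P0 P1 P2 -> mt N s Q0 Q1 Q2.
Proof. by move=> e0 e1 e2 [? ? ?]; split; rewrite -?e0 -?e1 -?e2. Qed.


Definition e0f N c : {poly int} := (1 - 'X^c) * g0 N c - 1.
Definition e1f N c : {poly int} := (1 - 'X^c) * g1 N c - 'X^c * g0 N c.
Definition e2f N c : {poly int} := (1 - 'X^c) * g2 N c - (2%:R * g1 N c - g0 N c + 1).

Lemma trE0 N c q : (0 < c)%N -> tr N (q * e0f N c) = 0.
Proof.
move=> Hc; rewrite /e0f L0 (_ : 1 - _ - 1 = - 'X^(c * N.+1)); last by ring.
by rewrite mulrN trN trXM ?oppr0 //; nia.
Qed.

Lemma trE1 N c q : (0 < c)%N -> tr N (q * e1f N c) = 0.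
Proof.
move=> Hc; rewrite /e1f L1 (_ : _ - _ - _ = - ((N.+1)%:Z%:P * 'X^(c * N.+1))); last first.
  by rewrite mul_polyC; ring.
by rewrite mulrN trN mulrA trXM ?oppr0 //; nia.
Qed.

Lemma trE2 N c q : (0 < c)%N -> tr N (q * e2f N c) = 0.
Proof.
move=> Hc; rewrite /e2f L2 (_ : _ - _ = - ((N%:Z ^+ 2)%:P * 'X^(c * N.+1))); last first.
  by rewrite -!mul_polyC (_ : (2%Z)%:P = 2%:R) ?polyCn //; ring.
by rewrite mulrN trN mulrA trXM ?oppr0 //; nia.
Qed.

Lemma keyD N c : (0 < c)%N ->
  tr N (g2 N c * g0 N c - g1 N c ^+ 2 - g0 N c ^+ 2 * g1 N c) = 0.
Proof.
move=> Hc.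
set D := g2 N c * g0 N c - g1 N c ^+ 2 - g0 N c ^+ 2 * g1 N c.
set x := 'X^c : {poly int}.
have E : D =
  (- D * (2%:R + e0f N c) * (1 + (1 + e0f N c)^+2) + g0 N c ^+ 4 *
     (2%:R * x - (1 - x) + (1 - x)^+2 * (2%:R * g1 N c - g0 N c + 1)
      - x^+2 * (2%:R + e0f N c) - x * (3%:R + 3%:R * e0f N c + e0f N c ^+ 2))) * e0f N c
  + (g0 N c ^+ 4 * (2%:R * (1 - x) - (1 - x)^+2 * (2%:R * x * g0 N c + e1f N c)
      - (1 - x) * (1 + e0f N c)^+2)) * e1f N c
  + (g0 N c ^+ 4 * ((1 - x)^+2 * (1 + e0f N c))) * e2f N c.
  rewrite /D /e0f /e1f /e2f /x; ring.
by rewrite E !trD !trE0 ?trE1 ?trE2 // !addr0.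
Qed.

Lemma tr_eq_by N (P Q R : {poly int}) : P = Q + R -> tr N R = 0 -> tr N P = tr N Q.
Proof. by move=> -> E; rewrite trD E addr0. Qed.

Lemma tr_mulD0 N (p D : {poly int}) : tr N D = 0 -> tr N (p * D) = 0.
Proof. by move=> E; rewrite -trMr E mulr0; apply/polyP=> i; rewrite coef_tr coef0 if_same. Qed.

Lemma GS_ext N c a b : (forall s, a s = b s) -> GS N c a = GS N c b.
Proof. by move=> H; apply: eq_bigr => s _; rewrite H. Qed.

Lemma GS0 N c : GS N c (fun _ => 0) = 0.
Proof. by rewrite /GS big1 // => s _; rewrite scale0r. Qed.

Lemma GSN N c a : GS N c (fun s => - a s) = - GS N c a.
Proof. by rewrite /GS -sumrN; apply: eq_bigr => s _; rewrite scaleNr. Qed.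

Lemma mt_binom1 N s k : mt N (binom1 s k) (1 + s%:P * 'X^k) 0 0.
Proof.
split; first by rewrite Mp_binom1_0 mul_polyC.
- by rewrite Mp_binom1_S /tr; apply/polyP => i; rewrite coef_poly !coef0 if_same.
- by rewrite Mp_binom1_S /tr; apply/polyP => i; rewrite coef_poly !coef0 if_same.
Qed.

Lemma mt_geoP N k : (0 < k)%N -> mt N (geo 1 k) (g0 N k) (g1 N k) (g2 N k).
Proof.
move=> Hk; split; rewrite Mp_geo //; congr tr; apply: GS_ext => s; by rewrite ?mul1r ?expr0 ?expr1.
Qed.

Lemma mt_geoN N k : (0 < k)%N -> mt N (geo (-1) k) (g0 N k) (- g1 N k) (g2 N k).
Proof.
move=> Hk; split; rewrite Mp_geo //; congr tr.
- by rewrite /g1 /GS -sumrN; apply: eq_bigr => s _; rewrite expr1 mulN1r scaleNr.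
- by rewrite /g2 /GS; apply: eq_bigr => s _; rewrite mulN1r sqrrN.
Qed.

Lemma mt_geo0 N k : (0 < k)%N -> mt N (geo 0 k) (g0 N k) 0 0.
Proof.
move=> Hk; split; rewrite Mp_geo //; rewrite -?(GS0 N k); congr tr;
  rewrite /GS; apply: eq_bigr => s _; by rewrite mul0r ?expr1 ?expr0n.
Qed.

Lemma supp_geoP k : supp (geo 1 k). Proof. by apply: supp_geo; lia. Qed.
Lemma supp_geoN k : supp (geo (-1) k). Proof. by apply: supp_geo; lia. Qed.
Lemma supp_geo0 k : supp (geo 0 k). Proof. by apply: supp_geo; lia. Qed.

Definition Phi N k : {poly int} := (1 + 'X^k) * g0 N k.

Lemma mt_Mbar N k : (0 < k)%N ->
  mt N (Mbar_factor k) (Phi N k) 0 (2%:R * (Phi N k * g1 N k)).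
Proof.
move=> Hk.
have H := mt_smul (supp_smul (geo 1 k) (supp_geoN k)) (mt_binom1 N (-1) (2 * k))
   (mt_smul (supp_geoN k) (mt_geoP N Hk) (mt_geoN N Hk)).
apply: mt_eq H.
- apply: (tr_eq_by (R := ((1 + 'X^k) * g0 N k) * e0f N k)); last exact: trE0.
  by rewrite /Phi /e0f mulnC exprM (_ : (-1)%:P = -1) ?polyCN //; ring.
- apply: (tr_eq_by (R := 0)); last by rewrite /tr; apply/polyP=> i; rewrite coef_poly !coef0 if_same.
  ring.
- apply: (tr_eq_by (R := (2%:R * (1 - 'X^k ^+ 2)) * (g2 N k * g0 N k - g1 N k ^+ 2 - g0 N k ^+ 2 * g1 N k)
     + (2%:R * (1 + 'X^k) * g0 N k * g1 N k) * e0f N k)).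
    by rewrite /Phi /e0f mulnC exprM (_ : (-1)%:P = -1) ?polyCN //; ring.
  by rewrite trD trE0 // tr_mulD0 ?keyD // add0r.
Qed.

Definition Psi N k : {poly int} := (1 + 'X^k) * g0 N (2 * k).-1 * g0 N (2 * k).

Lemma mt_M2bar N k : (0 < k)%N ->
  mt N (M2bar_factor k) (Psi N k) 0 (2%:R * (Psi N k * g1 N (2 * k))).
Proof.
move=> Hk.
have Hk2 : (0 < 2 * k)%N by lia.
have Hk1 : (0 < (2 * k).-1)%N by lia.
have H := mt_smul (supp_smul _ (supp_smul _ (supp_smul _ (supp_geoN (2 * k)))))
  (mt_binom1 N 1 k)
  (mt_smul (supp_smul _ (supp_smul _ (supp_geoN (2 * k)))) (mt_binom1 N (-1) (2 * k))
  (mt_smul (supp_smul _ (supp_geoN (2 * k))) (mt_geo0 N Hk1)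
  (mt_smul (supp_geoN (2 * k)) (mt_geoP N Hk2) (mt_geoN N Hk2)))).
apply: mt_eq H.
- apply: (tr_eq_by (R := ((1 + 'X^k) * g0 N (2 * k).-1 * g0 N (2 * k)) * e0f N (2 * k)));
    last exact: trE0.
  by rewrite /Psi /e0f (_ : (-1)%:P = -1) ?polyCN //; ring.
- apply: (tr_eq_by (R := 0)); last by rewrite /tr; apply/polyP=> i; rewrite coef_poly !coef0 if_same.
  ring.
- apply: (tr_eq_by (R := (2%:R * (1 + 'X^k) * g0 N (2 * k).-1 * (1 - 'X^(2 * k))) *
     (g2 N (2 * k) * g0 N (2 * k) - g1 N (2 * k) ^+ 2 - g0 N (2 * k) ^+ 2 * g1 N (2 * k))
     + (2%:R * (1 + 'X^k) * g0 N (2 * k).-1 * g0 N (2 * k) * g1 N (2 * k)) * e0f N (2 * k))).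
    by rewrite /Psi /e0f (_ : (-1)%:P = -1) ?polyCN //; ring.
  by rewrite trD trE0 // tr_mulD0 ?keyD // add0r.
Qed.


Lemma mt_sone N : mt N sone 1 0 0.
Proof.
have E : forall p, Mp N p sone = tr N ((0 ^+ p : int)%:P).
  move=> p; apply/polyP => i; rewrite coef_tr /Mp coef_poly ltnS coefC.
  case: ifP => // _; rewrite (@mom_point p sone i 0); first last.
  - by move=> m /negbTE Hm; rewrite /sone Hm andbF.
  - by apply/andP; split; lia.
  - by rewrite /sone eqxx andbT; case: (i == 0%N); rewrite ?mulr1 ?mulr0.
split; rewrite E //; by rewrite expr0n.
Qed.

Lemma tr_eqR N (P Q : {poly int}) : P = Q -> tr N P = tr N Q.
Proof. by move=> ->. Qed.

Lemma mt_sprod N F A H m : (forall k, (0 < k)%N -> mt N (F k) (A k) 0 (2%:R * (A k * H k))) ->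
  mt N (sprod F m) (\prod_(k < m) A k.+1) 0
     (2%:R * (\prod_(k < m) A k.+1 * \sum_(k < m) H k.+1)).
Proof.
move=> HF; elim: m => [|m IH].
  rewrite big_ord0 big_ord0 mulr0 mulr0; exact: mt_sone.
have := mt_smul (supp_sprod F m) (HF m.+1 (ltn0Sn m)) IH.
apply: mt_eq; apply: tr_eqR; rewrite ?big_ord_recr /=; ring.
Qed.


Lemma tr_g0_big N c : (N < c)%N -> tr N (g0 N c) = tr N 1.
Proof.
move=> Hc; rewrite g0E trD tr_sum big1 ?addr0 // => s _; apply: trX; nia.
Qed.

Lemma prod_pairs (f : nat -> {poly int}) n :
  \prod_(k < n) (f (2 * k).+1 * f (2 * k).+2) = \prod_(j < 2 * n) f j.+1.
Proof.
elim: n => [|n IH]; first by rewrite !big_ord0.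
have -> : (2 * n.+1 = (2 * n).+2)%N by lia.
by rewrite big_ord_recr IH !big_ord_recr /= mulrA.
Qed.

Lemma Psi_Phi n : tr n (\prod_(k < n) Psi n k.+1) = tr n (\prod_(k < n) Phi n k.+1).
Proof.
have E : \prod_(k < n) Psi n k.+1 =
   (\prod_(k < n) Phi n k.+1) * \prod_(j < n) g0 n (n + j).+1.
  rewrite /Psi /Phi.
  have E3 : forall k, ((1 + 'X^(k.+1)) * g0 n (2 * k.+1).-1 * g0 n (2 * k.+1) : {poly int}) =
     (1 + 'X^(k.+1)) * (g0 n (2 * k).+1 * g0 n (2 * k).+2).
    move=> k; rewrite -mulrA; congr (_ * (g0 n _ * g0 n _)); lia.
  under eq_bigr => k _ do rewrite E3.
  rewrite big_split /= (prod_pairs (fun j => g0 n j)) (_ : (2 * n = n + n)%N); last lia.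
  rewrite big_split_ord /=.
  rewrite [in RHS]big_split /= -mulrA.
  by [].
rewrite E -trMr (@tr_prod n _ _ _ _ (fun _ => 1)); last first.
  move=> j _; apply: tr_g0_big; lia.
by rewrite big1_eq trMr mulr1.
Qed.


Definition phi n (j : 'I_n) (x : 'I_n.+1 * bool) : {poly int} :=
  if x.2 ==> (0 < x.1)%N then 'X^(j.+1 * x.1) else 0.

Lemma prod_phi n (f : ovp_data n) : (\prod_j phi j (f j))`_n = (is_ovp f)%:R.
Proof.
rewrite /is_ovp; case: (boolP [forall i, (f i).2 ==> (0 < (f i).1)%N]) => H.
- rewrite andbT.
  have -> : \prod_j phi j (f j) = \prod_(j : 'I_n) 'X^(j.+1 * (f j).1).
    by apply: eq_bigr => j _; rewrite /phi (forallP H j).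
  by rewrite prodrXr coefXn eq_sym.
- rewrite andbF; move: H; rewrite negb_forall => /existsP[i Hi].
  by rewrite (bigD1 i) //= /phi (negbTE Hi) mul0r coef0.
Qed.

Lemma comb_sum n (w : 'I_n -> 'I_n.+1 * bool -> int) :
  \sum_(f : ovp_data n | is_ovp f) \sum_j w j (f j) =
  (\sum_(i : 'I_n) (\sum_x w i x *: phi i x) * \prod_(j | j != i) \sum_x phi j x)`_n.
Proof.
pose F (i j : 'I_n) (x : 'I_n.+1 * bool) := if j == i then w i x *: phi j x else phi j x.
have E1 : forall i, (\sum_x w i x *: phi i x) * \prod_(j | j != i) \sum_x phi j x =
    \prod_j \sum_x F i j x.
  move=> i; rewrite [in RHS](bigD1 i) //= /F /= eqxx; congr (_ * _).
  by apply: eq_bigr => j /negbTE ->.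
have E2 : forall i (f : ovp_data n), \prod_j F i j (f j) = w i (f i) *: \prod_j phi j (f j).
  move=> i f; rewrite (bigD1 i) //= [in RHS](bigD1 i) //= /F /= eqxx -scalerAl; congr (_ *: (_ * _)).
  by apply: eq_bigr => j /negbTE ->.
have E : \sum_(i : 'I_n) (\sum_x w i x *: phi i x) * \prod_(j | j != i) \sum_x phi j x =
    \sum_(f : ovp_data n) (\sum_j w j (f j)) *: \prod_j phi j (f j).
  under eq_bigr do rewrite E1 bigA_distr_bigA /=.
  under eq_bigr do under eq_bigr do rewrite E2.
  rewrite exchange_big /=; apply: eq_bigr => f _; by rewrite scaler_suml.
rewrite E coef_sum big_mkcond /=; apply: eq_bigr => f _.
rewrite coefZ prod_phi; case: (is_ovp f); by rewrite ?mulr1 ?mulr0.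
Qed.


Lemma pair_sum n (G : 'I_n.+1 * bool -> {poly int}) :
  \sum_x G x = \sum_(m < n.+1) (G (m, true) + G (m, false)).
Proof.
transitivity (\sum_(p : 'I_n.+1 * bool) G (p.1, p.2)).
  by apply: eq_bigr => -[].
rewrite -(pair_bigA _ (fun m b => G (m, b))) /=.
by apply: eq_bigr => m _; rewrite big_bool.
Qed.

Lemma Phi_sum n (j : 'I_n) : \sum_x phi j x + 'X^(j.+1 * n.+1) = Phi n j.+1.
Proof.
rewrite pair_sum /phi /= big_split /= /Phi mulrDl mul1r Xg0E.
rewrite big_ord_recl /= add0r.
have -> : \sum_(i < n.+1) 'X^(j.+1 * i) = g0 n j.+1.
  by rewrite /g0 /GS; apply: eq_bigr => i _; rewrite scale1r.
rewrite addrC addrA; congr (_ + _); rewrite addrC; congr (_ + _).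
Qed.

Definition S N c (a : nat -> int) : {poly int} := \sum_(s < N) a s *: 'X^(c * s.+1).

Lemma SD N c a b : S N c a + S N c b = S N c (fun s => a s + b s).
Proof. by rewrite /S -big_split; apply: eq_bigr => s _; rewrite scalerDl. Qed.

Lemma SN N c a : - S N c a = S N c (fun s => - a s).
Proof. by rewrite /S -sumrN; apply: eq_bigr => s _; rewrite scaleNr. Qed.

Lemma SC N c k a : k%:P * S N c a = S N c (fun s => k * a s).
Proof. by rewrite /S mulr_sumr; apply: eq_bigr => s _; rewrite mul_polyC scalerA. Qed.

Lemma S_ext N c a b : (forall s, (s < N)%N -> a s = b s) -> S N c a = S N c b.
Proof. by move=> H; apply: eq_bigr => s _; rewrite H. Qed.

Lemma g0S N c : g0 N c - 1 = S N c (fun _ => 1).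
Proof. rewrite g0E /S addrC addKr; by apply: eq_bigr => s _; rewrite scale1r. Qed.

Lemma g1S N c : g1 N c = S N c (fun s => (s.+1)%:Z).
Proof. by rewrite g1E. Qed.

Lemma W_sum n (j : 'I_n) :
  \sum_(x : 'I_n.+1 * bool) (j.+1 * (x.1 - x.2))%N%:Z *: phi j x =
  (j.+1)%:Z%:P * (2%:R * g1 n j.+1 - g0 n j.+1 + 1).
Proof.
rewrite pair_sum /phi /= big_ord_recl /= !muln0 scaler0 scale0r add0r.
rewrite (_ : 2%:R * g1 n j.+1 - g0 n j.+1 + 1 = (2%:R : int)%:P * g1 n j.+1 - (g0 n j.+1 - 1)); last first.
  by rewrite polyC_natr; ring.
rewrite g0S g1S SC SN SD SC.
rewrite add0r /S; apply: eq_bigr => s _; rewrite -scalerDl; congr (_ *: _); rewrite /bump /=; lia.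
Qed.

Lemma W'_sum n (j : 'I_n) :
  \sum_(x : 'I_n.+1 * bool) (j.+1 * x.2)%N%:Z *: phi j x = (j.+1)%:Z%:P * (g0 n j.+1 - 1).
Proof.
rewrite pair_sum /phi /= big_ord_recl /= !muln0 scaler0 scale0r add0r.
rewrite g0S SC add0r /S; apply: eq_bigr => s _; rewrite ?muln0 ?scale0r ?addr0; congr (_ *: _); lia.
Qed.


Definition Kn N c : {poly int} := (c%:Z)%:P * (g0 N c - 1).
Definition K2n N c : {poly int} := (c%:Z)%:P * (g0 N (2 * c) - 1).

Lemma tr_W n (j : 'I_n) :
  tr n (\sum_(x : 'I_n.+1 * bool) (j.+1 * (x.1 - x.2))%N%:Z *: phi j x) =
  tr n (Phi n j.+1 * Kn n j.+1).
Proof.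
rewrite W_sum; set c := j.+1; set x := 'X^c : {poly int}.
set g0' := g0 n c; set g1' := g1 n c.
set T := 2%:R * g1' - g0' + 1 - (1 + x) * g0' * (g0' - 1).
apply: (tr_eq_by (R := ((c%:Z)%:P * (- T * (2%:R + e0f n c) + g0' ^+ 2 *
     (2%:R * x - (1 - x) - (1 + x) * (2%:R + e0f n c) + (1 + x) * (1 - x)))) * e0f n c
   + ((c%:Z)%:P * (g0' ^+ 2 * (2%:R * (1 - x)))) * e1f n c)).
  by rewrite /T /Phi /Kn /e0f /e1f -/x -/g0' -/g1'; ring.
by rewrite trD trE0 // trE1 // addr0.
Qed.

Lemma tr_W' n (j : 'I_n) :
  tr n (\sum_(x : 'I_n.+1 * bool) (j.+1 * x.2)%N%:Z *: phi j x) =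
  tr n (Phi n j.+1 * (Kn n j.+1 - 2%:R * K2n n j.+1)).
Proof.
rewrite W'_sum; set c := j.+1; set x := 'X^c : {poly int}.
set g0' := g0 n c; set h0 := g0 n (2 * c).
set T := (g0' - 1) - (1 + x) * g0' * (g0' - 2%:R * h0 + 1).
set u := 1 - x; set v := 1 - x ^+ 2.
have Hx : 'X^(2 * c) = x ^+ 2 by rewrite /x mulnC exprM.
apply: (tr_eq_by (R := ((c%:Z)%:P * (- T * (2%:R + e0f n c) * (1 + e0f n (2 * c)) + g0' ^+ 2 * h0 *
     (u * v - (1 + x) * ((2%:R + e0f n c) * v - 2%:R * u * (1 + e0f n (2 * c)) + u * v)))) * e0f n c
   + ((c%:Z)%:P * (- T + g0' ^+ 2 * h0 * (2%:R * u * (1 + x)))) * e0f n (2 * c))).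
  by rewrite /T /Phi /Kn /K2n /e0f Hx -/x -/g0' -/h0 /u /v; ring.
by rewrite trD trE0 // trE0 // ?addr0 //; lia.
Qed.

Lemma sumK n : \sum_(i < n) Kn n i.+1 = \sum_(i < n) g1 n i.+1.
Proof.
under eq_bigr do rewrite /Kn g0S SC.
under [RHS]eq_bigr do rewrite g1S.
rewrite /S exchange_big /=; apply: eq_bigr => s _; apply: eq_bigr => i _.
by rewrite mulr1 mulnC.
Qed.

Lemma sumK2 n : \sum_(i < n) K2n n i.+1 = \sum_(i < n) g1 n (2 * i.+1).
Proof.
under eq_bigr do rewrite /K2n g0S SC.
under [RHS]eq_bigr do rewrite g1S.
rewrite /S exchange_big /=; apply: eq_bigr => s _; apply: eq_bigr => i _.
by rewrite mulr1 mulnAC.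
Qed.

Lemma tr_Phi n (j : 'I_n) : tr n (\sum_x phi j x) = tr n (Phi n j.+1).
Proof. by rewrite -Phi_sum trD trX ?addr0 //; nia. Qed.


Lemma comb_tr n (w : 'I_n -> 'I_n.+1 * bool -> int) (Kf : nat -> {poly int}) :
  (forall j : 'I_n, tr n (\sum_x w j x *: phi j x) = tr n (Phi n j.+1 * Kf j.+1)) ->
  \sum_(f : ovp_data n | is_ovp f) \sum_j w j (f j) =
  (\prod_(k < n) Phi n k.+1 * \sum_(k < n) Kf k.+1)`_n.
Proof.
move=> HW; rewrite comb_sum -[LHS]tr_coef -[RHS]tr_coef.
apply: (congr1 (fun p : {poly int} => p`_n)).
rewrite mulr_sumr !tr_sum; apply: eq_bigr => i _.
rewrite (trM_eq _ (HW i)) -trMr (@tr_prod n _ _ _ _ (fun j : 'I_n => Phi n j.+1)); last first.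
  by move=> j _; apply: tr_Phi.
rewrite trMr; congr tr; rewrite [in RHS](bigD1 i) //=; ring.
Qed.

Lemma nov_int n : (nov n)%:Z =
  \sum_(f : ovp_data n | is_ovp f) \sum_(j : 'I_n) (j.+1 * ((f j).1 - (f j).2))%N%:Z.
Proof.
rewrite -natz /nov natr_sum; apply: eq_bigr => f _.
by rewrite /nonover_sum natr_sum; apply: eq_bigr => j _; rewrite natz.
Qed.

Lemma ov_int n : (ov n)%:Z =
  \sum_(f : ovp_data n | is_ovp f) \sum_(j : 'I_n) (j.+1 * (f j).2)%N%:Z.
Proof.
rewrite -natz /ov natr_sum; apply: eq_bigr => f _.
by rewrite /over_sum natr_sum; apply: eq_bigr => j _; rewrite natz.
Qed.

Lemma mom_Mp n s : mom 2 s n = (Mp n 2 s)`_n.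
Proof. by rewrite /Mp coef_poly ltnSn. Qed.

Lemma Mbar2E n : Mbar_2 n = (2%:R * (\prod_(k < n) Phi n k.+1 * \sum_(k < n) g1 n k.+1))`_n.
Proof.
have [_ _ H] := mt_sprod (F := Mbar_factor) (A := Phi n) (H := g1 n) n (fun k Hk => mt_Mbar n Hk).
have -> : Mbar_2 n = mom 2 (sprod Mbar_factor n) n by [].
by rewrite mom_Mp H tr_coef.
Qed.

Lemma M2bar2E n : M2bar_2 n =
  (2%:R * (\prod_(k < n) Phi n k.+1 * \sum_(k < n) g1 n (2 * k.+1)))`_n.
Proof.
have [_ _ H] := mt_sprod (F := M2bar_factor) (A := Psi n) (H := fun k => g1 n (2 * k)) n
   (fun k Hk => mt_M2bar n Hk).
have -> : M2bar_2 n = mom 2 (sprod M2bar_factor n) n by [].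
rewrite mom_Mp H -tr_coef -[RHS]tr_coef; apply: (congr1 (fun p : {poly int} => p`_n)).
rewrite tr_tr; apply: trM_eqr; apply: trM_eq; exact: Psi_Phi.
Qed.

Lemma nov_main n : Mbar_2 n = 2%:R * (nov n)%:Z.
Proof.
rewrite Mbar2E nov_int (comb_tr (w := fun (j : 'I_n) (x : 'I_n.+1 * bool) => (j.+1 * (x.1 - x.2))%N%:Z) (Kf := Kn n)); last by move=> j; apply: tr_W.
by rewrite sumK -polyC_natr coefCM.
Qed.

Lemma ov_main n : Mbar_2 n - 2%:R * M2bar_2 n = 2%:R * (ov n)%:Z.
Proof.
rewrite Mbar2E M2bar2E ov_int (comb_tr (w := fun (j : 'I_n) (x : 'I_n.+1 * bool) => (j.+1 * x.2)%N%:Z)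
   (Kf := fun c => Kn n c - 2%:R * K2n n c)); last first.
  by move=> j; apply: tr_W'.
have E : \sum_(k < n) (Kn n k.+1 - 2%:R * K2n n k.+1) =
   \sum_(k < n) g1 n k.+1 - 2%:R * \sum_(k < n) g1 n (2 * k.+1).
  by rewrite sumrB -mulr_sumr sumK sumK2.
have c2 : forall (p : {poly int}) i, (2%:R * p)`_i = 2%:R * p`_i.
  by move=> p i; rewrite -polyC_natr coefCM.
rewrite E (_ : forall A B C : {poly int}, A * (B - 2%:R * C) = A * B - 2%:R * (A * C)); last first.
  by move=> A B C; ring.
rewrite coefB !c2; ring.
Qed.


Theorem proposition4p1 (n : nat) :
  ((nov n)%:R = (Mbar_2 n)%:~R / 2 :> rat) /\
  ((ov n)%:R = (Mbar_2 n)%:~R / 2 - (M2bar_2 n)%:~R :> rat).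
Proof.
have H1 := nov_main n.
have H2 := ov_main n.
have H2' : Mbar_2 n = 2%:R * M2bar_2 n + 2%:R * (ov n)%:Z by rewrite -H2 addrC subrK.
have cast : forall m : nat, ((m%:Z)%:~R : rat) = m%:R by move=> m; rewrite -pmulrn.
split.
- by rewrite H1 intrM !cast natrD; field.
- by rewrite H2' intrD !intrM !cast natrD; field.
Qed.
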